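(* Let $p$ be a prime and $f,g\in\mathbb{Z}[x]$ monic with nonzero resultant $r$. Then $$v_p(r)\ \ge\ \int_0^\infty\sum_{m=1}^{p^{\lceil t\rceil}}\chi_t^{(f)}(m)\,\chi_t^{(g)}(m)\,dt.$$
   Context: $v_p$ is the $p$-adic valuation, extended to an algebraic closure $\overline{\mathbb{Q}_p}$. For a monic $h\in\overline{\mathbb{Q}_p}[x]$ with factorization $h=\prod_i(x-\delta_i)$ (roots with multiplicity), $m\in\mathbb{Z}_p$ and real $t\ge0$, define $\chi_t^{(h)}(m)=\#\{i: v_p(m-\delta_i)\ge t\}$. The resultant of monic $f=\prod_i(x-\alpha_i)$, $g=\prod_j(x-\beta_j)$ is $r=\prod_{i,j}(\alpha_i-\beta_j)$. *)

(* Defs.v *)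
From HB Require Import structures.
From mathcomp Require Import all_boot all_order all_algebra all_field.
From mathcomp Require Import all_classical all_reals all_analysis.
Set Implicit Arguments. Unset Strict Implicit. Unset Printing Implicit Defensive.
Import Order.TTheory GRing.Theory Num.Theory.
Local Open Scope ring_scope.
Local Open Scope ereal_scope.

(* A valuation v : algC -> \bar R on the algebraic numbers algC (= an
   algebraic closure of Q) extending the p-adic valuation v_p of Q.
   Every root of a polynomial in Z[x] lies in algC, and (restricted to the
   algebraic numbers) the p-adic valuation extended to an algebraic closure
   of Q_p is exactly such a valuation (all of them are Galois conjugate). *)
Definition padic_valuation (R : realType) (p : nat) (v : algC -> \bar R) : Prop :=
  [/\ forall x : algC, v x = +oo <-> x = 0%R,
      forall x y : algC, v (x * y)%R = v x + v y,
      forall x y : algC, Order.min (v x) (v y) <= v (x + y)%R &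
      forall z : int, z != 0%R -> v (z%:~R) = ((logn p `|z|%N)%:R)%:E].

(* chi_t^{(h)}(m) where the roots of h (with multiplicity) are the list rs *)
Definition chi (R : realType) (v : algC -> \bar R) (rs : seq algC) (t : R) (m : nat) : nat :=
  count (fun d : algC => (t%:E <= v (m%:R - d)%R)) rs.

Definition res_roots (rf rg : seq algC) : algC :=
  (\prod_(a <- rf) \prod_(b <- rg) (a - b))%R.

Definition integrand (R : realType) (p : nat) (v : algC -> \bar R)
  (rf rg : seq algC) (t : R) : R :=
  ((\sum_(1 <= m < (p ^ `|Num.ceil t|%N).+1) chi v rf t m * chi v rg t m)%N)%:R.

(* Main.v *)
Require Import Defs.
From HB Require Import structures.
From mathcomp Require Import all_boot all_order all_algebra all_field.
From mathcomp Require Import all_classical all_reals all_analysis.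
From mathcomp Require Import measurable_realfun lebesgue_measure lebesgue_integral.
From mathcomp Require Import lra ring zify.
Import Order.TTheory GRing.Theory Num.Theory.
Local Open Scope ring_scope.

Section Meas.
Local Open Scope classical_set_scope.

Lemma my_le_integral (R : realType) (D : set R) (f g : R -> \bar R) :
  (forall x, D x -> (0 <= f x)%E) -> (forall x, D x -> (f x <= g x)%E) ->
  (\int[lebesgue_measure]_(x in D) f x <= \int[lebesgue_measure]_(x in D) g x)%E.
Proof.
move=> f0 fg.
have g0 x : D x -> (0 <= g x)%E by move=> Dx; exact: le_trans (f0 _ Dx) (fg _ Dx).
rewrite ge0_integralE // [leRHS]ge0_integralE //=.
apply: ereal_sup_le => _ [h hf <-]; exists h => //= x.
apply: le_trans (hf x) _; rewrite /patch; case: ifP => // /set_mem Dx; exact: fg.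
Qed.

Lemma indic_le (R : realType) (r t : R) :
  (\1_(`]-oo, r]%classic : set R) t : R) = ((t <= r)%R : nat)%:R.
Proof.
rewrite indicE; case: (boolP (t <= r)%R) => h.
  by rewrite mem_set //= in_itv /= h.
by rewrite memNset //= in_itv /= (negbTE h).
Qed.

Lemma int_indic (R : realType) (r : R) : (0 <= r)%R ->
  (\int[lebesgue_measure]_(t in `[0%R, +oo[%classic) (\1_(`]-oo, r]%classic : set R) t)%:E
   = r%:E)%E.
Proof.
move=> r0; rewrite integral_indic//.
have -> : `]-oo, r]%classic `&` `[0%R, +oo[%classic = `[0%R, r]%classic :> set R.
  apply/seteqP; split => x /=; rewrite !in_itv /= ?andbT.
    by case=> -> ->.
  by move/andP=> [-> ->].
etransitivity; first exact: (lebesgue_measure_itv `[0%R, r]%R). rewrite /= lte_fin.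
case: ltP => [_|]; first by rewrite sube0.
by move=> h; apply/eqP; rewrite eq_le !lee_fin r0 h.
Qed.

Lemma meas_indic (R : realType) (r : R) :
  measurable_fun (`[0%R, +oo[%classic : set R) (fun t : R => ((\1_(`]-oo, r]%classic : set R) t : R))%:E).
Proof.
apply/measurable_EFinP; apply: measurable_indic. exact: measurable_itv.
Qed.

End Meas.

Set Implicit Arguments. Unset Strict Implicit.

Section V.

Lemma v0 (R : realType) p (v : algC -> \bar R) : padic_valuation p v -> v 0 = +oo%E.
Proof. by case=> H _ _ _; apply/H. Qed.

Lemma vint (R : realType) p (v : algC -> \bar R) (z : int) : padic_valuation p v -> z != 0%R ->
  v (z%:~R) = ((logn p `|z|%N)%:R)%:E.
Proof. by case=> _ _ _ H; apply: H. Qed.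

Lemma v1 (R : realType) p (v : algC -> \bar R) : padic_valuation p v -> v 1 = 0%E.
Proof. by move=> Hv; have := vint Hv (isT : (1%:Z != 0%R)); rewrite logn1. Qed.

Lemma vN1 (R : realType) p (v : algC -> \bar R) : padic_valuation p v -> v (-1) = 0%E.
Proof. by move=> Hv; have := vint Hv (isT : ((-1 : int) != 0%R)); rewrite logn1. Qed.

Lemma vM (R : realType) p (v : algC -> \bar R) x y : padic_valuation p v -> v (x * y) = (v x + v y)%E.
Proof. by case=> _ H _ _; apply: H. Qed.

Lemma vD (R : realType) p (v : algC -> \bar R) x y : padic_valuation p v ->
  (Order.min (v x) (v y) <= v (x + y)%R)%E.
Proof. by case=> _ _ H _; apply: H. Qed.

Lemma vN (R : realType) p (v : algC -> \bar R) x : padic_valuation p v -> v (- x) = v x.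
Proof. by move=> Hv; rewrite -mulN1r (vM _ _ Hv) (vN1 Hv) add0e. Qed.

Lemma vDge (R : realType) p (v : algC -> \bar R) x y c : padic_valuation p v ->
  (c <= v x)%E -> (c <= v y)%E -> (c <= v (x + y)%R)%E.
Proof. by move=> Hv hx hy; apply: le_trans (vD _ _ Hv); rewrite le_min hx hy. Qed.

Lemma vBge (R : realType) p (v : algC -> \bar R) x y c : padic_valuation p v ->
  (c <= v x)%E -> (c <= v y)%E -> (c <= v (x - y)%R)%E.
Proof. by move=> Hv hx hy; apply: (vDge Hv) => //; rewrite (vN _ Hv). Qed.

Lemma vsum (R : realType) p (v : algC -> \bar R) (I : Type) (s : seq I) (F : I -> algC) c :
  padic_valuation p v -> (forall i, (c <= v (F i))%E) -> (c <= v (\sum_(i <- s) F i)%R)%E.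
Proof.
move=> Hv hF; elim: s => [|i s IH]; first by rewrite big_nil (v0 Hv) leey.
by rewrite big_cons; apply: (vDge Hv).
Qed.

Lemma vprod (R : realType) p (v : algC -> \bar R) (I : Type) (s : seq I) (F : I -> algC) :
  padic_valuation p v -> v (\prod_(i <- s) F i) = (\sum_(i <- s) v (F i))%E.
Proof.
move=> Hv; elim: s => [|i s IH]; first by rewrite !big_nil (v1 Hv).
by rewrite !big_cons (vM _ _ Hv) IH.
Qed.

Lemma vfin (R : realType) p (v : algC -> \bar R) x : padic_valuation p v -> x != 0%R ->
  v x \is a fin_num.
Proof.
move=> Hv x0; rewrite fin_numE; apply/andP; split.
  apply/eqP => h; have := vM x (x^-1) Hv; rewrite divff // (v1 Hv) h addNye.
  by [].
by apply/eqP => /(proj1 (let: And4 H _ _ _ := Hv in H x)) /eqP; rewrite (negbTE x0).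
Qed.

Lemma vexp (R : realType) p (v : algC -> \bar R) x (s : R) n : padic_valuation p v ->
  v x = s%:E -> v (x ^+ n) = (s *+ n)%:E.
Proof.
move=> Hv hx; elim: n => [|n IH]; first by rewrite expr0 (v1 Hv).
by rewrite exprS (vM _ _ Hv) hx IH mulrS EFinD.
Qed.

Lemma vint_ge0 (R : realType) p (v : algC -> \bar R) (z : int) : padic_valuation p v ->
  (0 <= v (z%:~R))%E.
Proof.
move=> Hv; have [->|z0] := eqVneq z 0%R; first by rewrite mulr0z (v0 Hv) leey.
by rewrite (vint Hv z0) lee_fin ler0n.
Qed.


Lemma alg_int (R : realType) p (v : algC -> \bar R) (q : {poly int}) (a : algC) :
  padic_valuation p v -> q \is monic -> (map_poly intr q).[a] = 0 -> (0 <= v a)%E.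
Proof.
move=> Hv qm ra.
rewrite leNgt; apply/negP => va.
have a0 : a != 0 by apply: contraTneq va => ->; rewrite (v0 Hv) ltNge leey.
set s := fine (v a).
have vas : v a = s%:E by rewrite fineK // (vfin Hv a0).
have s0 : s < 0 by rewrite -lte_fin -vas.
have szQ : size (map_poly intr q : {poly algC}) = size q.
  exact: (size_map_inj_poly (@intr_inj algC) (mulr0z 1) q).
have q0 : q != 0 := monic_neq0 qm.
set n := (size q).-1.
have szq : size q = n.+1 by rewrite prednK // size_poly_gt0.
have Qn : (map_poly intr q)`_n = 1 :> algC.
  by rewrite coef_map_id0 ?mulr0z // /n -lead_coefE (monicP qm).
move: ra; rewrite horner_coef szQ szq big_ord_recr /= Qn mul1r => /eqP.
rewrite addrC addr_eq0 => /eqP hn.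
clearbody n; case: n hn Qn szq => [|n] hn _ _.
  by move: hn; rewrite big_ord0 expr0 oppr0 => /eqP; rewrite oner_eq0.
have := congr1 v hn; rewrite (vN _ Hv) (vexp _ Hv vas) => h.
have : ((s *+ n)%:E <= (s *+ n.+1)%:E)%E.
  rewrite h; apply: (vsum _ Hv) => i; rewrite (vM _ _ Hv) (vexp _ Hv vas) coef_map_id0 ?mulr0z //.
  rewrite -[X in (X <= _)%E]add0e; apply: leeD; first exact: (vint_ge0 _ Hv).
  rewrite lee_fin; apply: ler_wnMn2l; first exact: ltW.
  by rewrite -ltnS.
rewrite lee_fin mulrS => hh.
have : s + s *+ n < s *+ n by rewrite -subr_lt0 addrK.
by rewrite ltNge hh.
Qed.

End V.

Lemma vnat (R : realType) p (v : algC -> \bar R) (n : nat) : padic_valuation p v -> (0 < n)%N ->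
  v n%:R = ((logn p n)%:R)%:E.
Proof. by move=> Hv n0; rewrite pmulrn (vint Hv) // -lt0n. Qed.

Lemma sum_le1 (s : seq nat) (Q : pred nat) : uniq s ->
  (forall x y, x \in s -> y \in s -> Q x -> Q y -> x = y) -> (\sum_(m <- s) Q m <= 1)%N.
Proof.
elim: s => [|x s IH]; first by rewrite big_nil.
move=> /= /andP[xs us] H; rewrite big_cons.
case Qx: (Q x) => /=.
  rewrite big1_seq // => y /andP[Qy ys]; apply/eqP; rewrite eqb0; apply/negP => Qy'.
  have e : x = y by apply: (H x y (mem_head _ _) _ Qx Qy'); rewrite inE ys orbT.
  by move: xs; rewrite e ys.
by rewrite add0n; apply: IH => // a b ha hb; apply: H; rewrite inE ?ha ?hb orbT.
Qed.

Lemma count_sum (T : Type) (a : pred T) (s : seq T) : count a s = (\sum_(x <- s) a x)%N.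
Proof. by elim: s => [|x s IH]; rewrite ?big_nil ?big_cons //= IH. Qed.

Lemma key (R : realType) p (v : algC -> \bar R) (a b : algC) (t : R) :
  prime p -> padic_valuation p v -> 0 <= t ->
  (\sum_(1 <= m < (p ^ `|Num.ceil t|%N).+1)
     ((t%:E <= v (m%:R - a)%R)%E * (t%:E <= v (m%:R - b)%R)%E) <= (t%:E <= v (a - b)%R)%E)%N.
Proof.
move=> pp Hv t0.
set P := (p ^ `|Num.ceil t|%N)%N.
set A := fun m : nat => (t%:E <= v (m%:R - a)%R)%E.
have noclose m1 m2 : (1 <= m1)%N -> (m1 < m2)%N -> (m2 <= P)%N -> A m1 -> A m2 -> False.
  move=> h1 h12 h2 A1 A2.
  have hd : (0 < m2 - m1)%N by rewrite subn_gt0.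
  have : (t%:E <= v (m2 - m1)%:R%R)%E.
    have -> : ((m2 - m1)%:R = (m2%:R - a) - (m1%:R - a) :> algC).
      by rewrite natrB ?(ltnW h12) //; ring.
    exact: (vBge Hv).
  rewrite (vnat Hv hd) lee_fin pmulrn -ceil_le_int => hc.
  have c0 : (0 <= Num.ceil t)%R by rewrite ceil_ge0; apply: lt_le_trans t0; rewrite ltrN10.
  have : (`|Num.ceil t|%N <= logn p (m2 - m1))%N by rewrite -lez_nat gez0_abs.
  rewrite -pfactor_dvdn // -/P => /dvdn_leq => /(_ hd).
  lia.
have C m : A m -> (t%:E <= v (m%:R - b)%R)%E -> (t%:E <= v (a - b)%R)%E.
  move=> hA hB.
  have -> : a - b = (m%:R - b) - (m%:R - a) by ring.
  exact: (vBge Hv).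
rewrite -/A; case hC: (t%:E <= v (a - b)%R)%E => /=.
  apply: leq_trans (_ : \sum_(1 <= m < P.+1) A m <= 1)%N.
    apply: leq_sum => m _.
    by rewrite /A; case: (t%:E <= v (m%:R - a)%R)%E; rewrite ?mul1n ?mul0n ?leq_b1.
  rewrite /index_iota; apply: sum_le1; first exact: iota_uniq.
  move=> x y; rewrite !mem_iota => /andP[x1 xP] /andP[y1 yP] Ax Ay.
  case: (ltngtP x y) => // hxy; exfalso.
    by apply: (noclose x y) => //; lia.
  by apply: (noclose y x) => //; lia.
rewrite big1 // => m _; case hA: (A m); rewrite /A in hA; rewrite hA //; case hB: (t%:E <= v (m%:R - b)%R)%E => //.
by move: hC; rewrite (C m hA hB).
Qed.

Lemma in_le (R : realType) (r t : R) : (t \in (`]-oo, r]%classic : set R)) = (t <= r).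
Proof.
case: (boolP (t <= r)) => h; first by rewrite mem_set //= in_itv /= h.
by rewrite memNset //= in_itv /= (negbTE h).
Qed.

Lemma pointwise (R : realType) p (v : algC -> \bar R) (rf rg : seq algC) (t : R) :
  prime p -> padic_valuation p v -> 0 <= t ->
  (\sum_(1 <= m < (p ^ `|Num.ceil t|%N).+1) chi v rf t m * chi v rg t m <=
   \sum_(k <- [seq (a, b) | a <- rf, b <- rg]) (t%:E <= v (k.1 - k.2)%R)%E)%N.
Proof.
move=> pp Hv t0; rewrite big_allpairs /chi.
have -> : (\sum_(1 <= m < (p ^ `|Num.ceil t|%N).+1)
   count (fun d : algC => (t%:E <= v (m%:R - d)%R)%E) rf *
   count (fun d : algC => (t%:E <= v (m%:R - d)%R)%E) rg =
  \sum_(a <- rf) \sum_(b <- rg) \sum_(1 <= m < (p ^ `|Num.ceil t|%N).+1)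
   ((t%:E <= v (m%:R - a)%R)%E * (t%:E <= v (m%:R - b)%R)%E))%N.
  rewrite (eq_bigr (fun m : nat => \sum_(a <- rf) \sum_(b <- rg) ((t%:E <= v (m%:R - a)%R)%E * (t%:E <= v (m%:R - b)%R)%E))%N); last first.
    move=> m _; rewrite !count_sum big_distrl /=; apply: eq_bigr => a _.
    by rewrite big_distrr.
  rewrite exchange_big /=; apply: eq_bigr => a _.
  by rewrite exchange_big.
apply: leq_sum => a _; apply: leq_sum => b _; exact: key.
Qed.

Theorem mainTheorem12 (R : realType) (p : nat) (v : algC -> \bar R)
  (f g : {poly int}) (rf rg : seq algC) :
  prime p -> padic_valuation p v ->
  f \is monic -> g \is monic ->
  map_poly intr f = \prod_(a <- rf) ('X - a%:P) ->
  map_poly intr g = \prod_(b <- rg) ('X - b%:P) ->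
  res_roots rf rg != 0 ->
  (\int[lebesgue_measure]_(t in `[0%R, +oo[%classic) (integrand p v rf rg t)%:E
     <= v (res_roots rf rg))%E.
Proof.
move=> pp Hv fm gm Hf Hg r0.
have intf a : a \in rf -> (0 <= v a)%E.
  move=> ha; apply: (alg_int Hv fm); rewrite Hf horner_prod; apply/eqP.
  rewrite prodf_seq_eq0; apply/hasP; exists a => //=.
  by rewrite hornerXsubC subrr.
have intg b : b \in rg -> (0 <= v b)%E.
  move=> hb; apply: (alg_int Hv gm); rewrite Hg horner_prod; apply/eqP.
  rewrite prodf_seq_eq0; apply/hasP; exists b => //=.
  by rewrite hornerXsubC subrr.
have ab0 a b : a \in rf -> b \in rg -> a - b != 0.
  move=> ha hb; apply: contraNneq r0 => e.
  rewrite /res_roots prodf_seq_eq0; apply/hasP; exists a => //=.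
  by rewrite prodf_seq_eq0; apply/hasP; exists b => //=; rewrite e.
set s := [seq (a, b) | a <- rf, b <- rg].
pose rr (k : algC * algC) := fine (v (k.1 - k.2)).
have hk k : k \in s -> v (k.1 - k.2) = (rr k)%:E /\ 0 <= rr k.
  move/allpairsP => [[a b] [ha hb ->]] /=.
  have fin := vfin Hv (ab0 a b ha hb).
  split; first by rewrite /rr fineK.
  rewrite -lee_fin /rr fineK //; apply: (vBge Hv); [exact: intf | exact: intg].
apply: (le_trans (@my_le_integral R _ _
  (fun t => (\sum_(k <- s) ((\1_(`]-oo, rr k]%classic : set R) t : R))%:E)%E) _ _)).
- by move=> t _; rewrite lee_fin ler0n.
- move=> t /=; rewrite in_itv /= andbT => t0.
  rewrite sumEFin lee_fin /integrand -natr_sum ler_nat.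
  apply: leq_trans (pointwise rf rg pp Hv t0) _.
  rewrite big_seq [X in (_ <= X)%N]big_seq leq_eqVlt; apply/orP; left; apply/eqP.
  apply: eq_bigr => k hks; have [-> _] := hk k hks.
  by rewrite lee_fin in_le.
rewrite ge0_integral_sum //; try (by move=> k; exact: meas_indic);
  try (by move=> k t _; rewrite lee_fin indic_ge0).
have -> : v (res_roots rf rg) = (\sum_(k <- s) v (k.1 - k.2)%R)%E.
  rewrite big_allpairs /res_roots.
  have e1 := vprod rf (fun a => \prod_(b <- rg) (a - b)) Hv.
  rewrite /= in e1; rewrite e1; apply: eq_bigr => a _.
  exact: (vprod rg (fun b => a - b) Hv).
rewrite big_seq [X in (_ <= X)%E]big_seq; apply: lee_sum => k hks.
by have [-> h0] := hk k hks; rewrite int_indic.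
Qed.
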